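(* Let $\mathcal{S}$ be an abstract numeration system built on a tree language with a purely periodic labeled signature. The set of $\mathcal{S}$-automatic sequences is stable under finite modifications: if $\mathbf{x}$ is $\mathcal{S}$-automatic and $\mathbf{y}$ is an infinite word over a finite alphabet that differs from $\mathbf{x}$ in only finitely many positions, then $\mathbf{y}$ is $\mathcal{S}$-automatic.
   Context: An abstract numeration system is a triple $\mathcal{S}=(L,C,<)$ with $L$ an infinite language over a totally ordered finite alphabet $C$; $\mathrm{rep}_{\mathcal{S}}(n)$ is the $(n+1)$st word of $L$ in radix order (shorter first, then lexicographic). $\mathbf{x}$ over $B$ is $\mathcal{S}$-automatic if there is a deterministic finite automaton with output $(Q,q_0,C,\delta,\mu:Q\to B)$ with $x_n=\mu(\delta(q_0,\mathrm{rep}_{\mathcal{S}}(n)))$ for all $n$. A purely periodic labeled signature over $C$ (smallest letter $0$) is a sequence $(s_n)_{n\ge0}$ with $s_n=w_{n\bmod r}$, each $w_i$ having strictly increasing letters and $w_0=0y$ with $y$ non-empty. It generates an infinite labeled tree: nodes $v_0,v_1,\ldots$ are created in breadth-first order; $v_0$ is the root; the children of $v_n$ are reached by edges labeled by the letters of $s_n$ in increasing order, new children receiving the next unused indices; for the root, the edge labeled $0$ is a loop to $v_0$ and the other letters of $s_0$ lead to $v_1,\ldots,v_{|s_0|-1}$. The tree language $L(\mathsf{s})$ is the set of labels of paths from the root not starting with $0$; $\mathcal{S}=(L(\mathsf{s}),C,<)$. *)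

(* Defs.v *)
From mathcomp Require Import all_boot.
Set Implicit Arguments. Unset Strict Implicit. Unset Printing Implicit Defensive.

(* Purely periodic labeled signature given by the period words w_0..w_{r-1}. *)
Definition strictly_increasing (k : nat) (u : seq 'I_k) : bool :=
  sorted (fun a b : 'I_k => (val a < val b)%N) u.

Definition purely_periodic_signature (k : nat) (ws : seq (seq 'I_k)) : Prop :=
  (0 < size ws)%N /\
  (forall i, (i < size ws)%N -> strictly_increasing (nth [::] ws i)) /\
  exists (z : 'I_k) (y : seq 'I_k),
    nth [::] ws 0 = z :: y /\ val z = 0%N /\ y != [::].

Definition sig_at (k : nat) (ws : seq (seq 'I_k)) (n : nat) : seq 'I_k :=
  nth [::] ws (n %% size ws).

(* number of new children created by node v_j (root: the 0-loop is not new) *)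
Definition nchildren (k : nat) (ws : seq (seq 'I_k)) (j : nat) : nat :=
  if j == 0%N then (size (sig_at ws 0)).-1 else size (sig_at ws j).

(* index of the first child of v_n, n >= 1 (breadth-first numbering) *)
Definition first_child (k : nat) (ws : seq (seq 'I_k)) (n : nat) : nat :=
  (1 + \sum_(j < n) nchildren ws j)%N.

Definition tree_edge (k : nat) (ws : seq (seq 'I_k)) (n : nat) (a : 'I_k)
  : option nat :=
  let s := sig_at ws n in
  let i := index a s in
  if (size s <= i)%N then None
  else if n == 0%N then Some i  (* i = 0 is the loop to v_0; i >= 1 gives v_i *)
  else Some (first_child ws n + i)%N.

Definition tree_run (k : nat) (ws : seq (seq 'I_k)) (w : seq 'I_k)
  : option nat :=
  foldl (fun o a => if o is Some n then tree_edge ws n a else None) (Some 0%N) w.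

Definition tree_language (k : nat) (ws : seq (seq 'I_k)) (w : seq 'I_k) : bool :=
  (if w is a :: _ then val a != 0%N else true) && (tree_run ws w != None).

Definition infinite_language (k : nat) (L : seq 'I_k -> bool) : Prop :=
  ~ exists s : seq (seq 'I_k), forall w, L w -> w \in s.

Fixpoint lex_lt (k : nat) (u v : seq 'I_k) : bool :=
  match u, v with
  | [::], _ :: _ => true
  | a :: u', b :: v' => ((val a < val b)%N) || ((val a == val b) && lex_lt u' v')
  | _, _ => false
  end.

Definition radix_lt (k : nat) (u v : seq 'I_k) : bool :=
  (size u < size v)%N || ((size u == size v) && lex_lt u v).

(* rep_S(n) = w : w is the (n+1)-st word of L in radix order, i.e.
   w \in L and exactly n words of L are radix-smaller than w *)
Definition is_rep (k : nat) (L : seq 'I_k -> bool) (n : nat) (w : seq 'I_k)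
  : Prop :=
  L w /\ exists s : seq (seq 'I_k),
    [/\ uniq s, size s = n & forall u, u \in s <-> (L u /\ radix_lt u w)].

Definition S_automatic (k : nat) (L : seq 'I_k -> bool) (B : Type)
  (x : nat -> B) : Prop :=
  exists (Q : finType) (q0 : Q) (delta : Q -> 'I_k -> Q) (mu : Q -> B),
    forall n w, is_rep L n w -> x n = mu (foldl delta q0 w).

(* Main.v *)
Require Import Defs.
From mathcomp Require Import all_boot.
From Stdlib Require Import ClassicalEpsilon.
Set Implicit Arguments. Unset Strict Implicit. Unset Printing Implicit Defensive.

Section Aux.
Variable k : nat.

Lemma lex_irr (u : seq 'I_k) : ~~ lex_lt u u.
Proof. by elim: u => //= a u IH; rewrite ltnn eqxx /= (negbTE IH). Qed.

Lemma lex_trans (u v w : seq 'I_k) : lex_lt u v -> lex_lt v w -> lex_lt u w.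
Proof.
elim: u v w => [|a u IH] [|b v] [|c w] //=.
move=> /orP[ab|/andP[/eqP ab uv]] /orP[bc|/andP[/eqP bc vw]].
- by rewrite (ltn_trans ab bc).
- by rewrite -bc ab.
- by rewrite ab bc.
- by rewrite ab bc eqxx (IH _ _ uv vw) orbT.
Qed.

Lemma lex_total (u v : seq 'I_k) : u != v -> lex_lt u v || lex_lt v u.
Proof.
elim: u v => [|a u IH] [|b v] //=.
case: (ltngtP (val a) (val b)) => //= ab uv.
have ab' : a = b by apply: val_inj.
have : u != v by apply: contra uv => /eqP ->; rewrite ab'.
by move/IH.
Qed.

Lemma radix_irr (u : seq 'I_k) : ~~ radix_lt u u.
Proof. by rewrite /radix_lt ltnn eqxx /= lex_irr. Qed.

Lemma radix_trans (u v w : seq 'I_k) : radix_lt u v -> radix_lt v w -> radix_lt u w.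
Proof.
rewrite /radix_lt.
move=> /orP[h1|/andP[/eqP h1 h2]] /orP[h3|/andP[/eqP h3 h4]].
- by rewrite (ltn_trans h1 h3).
- by rewrite -h3 h1.
- by rewrite h1 h3.
- by rewrite h1 h3 eqxx (lex_trans h2 h4) orbT.
Qed.

Lemma radix_total (u v : seq 'I_k) : u != v -> radix_lt u v || radix_lt v u.
Proof.
move=> uv; rewrite /radix_lt.
case: (ltngtP (size u) (size v)) => //= e.
by rewrite ?e ?eqxx /= lex_total.
Qed.

Lemma rep_uniq_w (L : seq 'I_k -> bool) n w w' :
  is_rep L n w -> is_rep L n w' -> w = w'.
Proof.
suff H : forall w w', is_rep L n w -> is_rep L n w' -> ~~ radix_lt w w'.
  move=> h1 h2; apply/eqP; apply/negPn/negP => ne.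
  by case/orP: (radix_total ne) => lt; [move: (H _ _ h1 h2)|move: (H _ _ h2 h1)];
     rewrite lt.
move=> {}w {}w' [Lw [s [us ss Hs]]] [Lw' [s' [us' ss' Hs']]].
apply/negP => lt.
have : size (w :: s) <= size s'.
  apply: uniq_leq_size.
    rewrite /= us andbT; apply/negP => /Hs [_]; by rewrite (negbTE (radix_irr w)).
  move=> u; rewrite inE => /orP[/eqP ->|/Hs [Lu lu]]; apply/Hs'; split => //.
  exact: radix_trans lu lt.
by rewrite /= ss ss' ltnn.
Qed.

Lemma rep_uniq_n (L : seq 'I_k -> bool) n n' w :
  is_rep L n w -> is_rep L n' w -> n = n'.
Proof.
move=> [_ [s [us <- Hs]]] [_ [s' [us' <- Hs']]].
apply/eqP; rewrite eqn_leq; apply/andP; split; apply: uniq_leq_size => // u.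
- by move/Hs/Hs'.
- by move/Hs'/Hs.
Qed.

Lemma rep_bound (L : seq 'I_k -> bool) N :
  exists M, forall n w, n < N -> is_rep L n w -> size w <= M.
Proof.
elim: N => [|N [M HM]]; first by exists 0.
case: (classic (exists w, is_rep L N w)) => [[w0 h0]|hn].
- exists (maxn M (size w0)) => n w; rewrite ltnS leq_eqVlt => /orP[/eqP ->|lt] h.
    by rewrite (rep_uniq_w h h0) leq_maxr.
  exact: leq_trans (HM _ _ lt h) (leq_maxl _ _).
- exists M => n w; rewrite ltnS leq_eqVlt => /orP[/eqP ->|lt] h.
    by case: hn; exists w.
  exact: HM lt h.
Qed.

Fixpoint allw (m : nat) : seq (seq 'I_k) :=
  if m is m'.+1 then [::] :: [seq a :: u | a <- enum 'I_k, u <- allw m']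
  else [:: [::]].

Lemma allwP m (w : seq 'I_k) : size w <= m -> w \in allw m.
Proof.
elim: m w => [|m IH] [|a w] //=; rewrite ?inE ?eqxx //.
rewrite ltnS => /IH h; apply/orP; right.
by apply: (allpairs_f (fun a u => a :: u)) => //; rewrite mem_enum.
Qed.

Variable M : nat.
Definition W := seq_sub (allw M).

Definition step (o : option W) (a : 'I_k) : option W :=
  if o is Some u then insub (rcons (val u) a) else None.

Lemma step_None w : foldl step None w = None.
Proof. by elim: w. Qed.

Lemma step_val w : forall o v u, (forall u0, o = Some u0 -> val u0 = v) ->
  foldl step o w = Some u -> val u = v ++ w.
Proof.
elim: w => [|a w IH] o v u ho /=; first by move/ho; rewrite cats0.
case: o ho => [u0 ho|]; last by rewrite step_None.
rewrite /=; case: insubP => [u1 _ e1|_]; last by rewrite step_None.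
move=> h; rewrite -cat_rcons; apply: (IH _ _ u _ h).
by move=> u2 [<-]; rewrite e1 (ho u0).
Qed.

Lemma step_some w : forall u, size (val u ++ w) <= M ->
  exists u', foldl step (Some u) w = Some u'.
Proof.
elim: w => [|a w IH] u /=; first by eauto.
case: insubP => [u1 _ e1|nin] h.
  by apply: IH; rewrite e1 cat_rcons.
case/negP: nin; apply: allwP; rewrite size_rcons.
by move: h; rewrite size_cat /= addnS; apply: leq_trans; rewrite ltnS leq_addr.
Qed.

End Aux.

Theorem mainTheorem14 (k : nat) (ws : seq (seq 'I_k))
  (Hsig : purely_periodic_signature ws)
  (Hinf : infinite_language (tree_language ws))
  (B : finType) (x y : nat -> B)
  (Hx : S_automatic (tree_language ws) x)
  (Hfin : exists N, forall n, (N <= n)%N -> x n = y n) :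
  S_automatic (tree_language ws) y.
Proof.
set L := tree_language ws.
case: Hx => Q [q0 [delta [mu Hmu]]].
case: Hfin => N HN.
case: (rep_bound L N) => M HM.
have e0 : ([::] : seq 'I_k) \in allw k M by apply: allwP.
pose u0 : W k M := SeqSub e0.
pose delta' (p : Q * option (W k M)) (a : 'I_k) := (delta p.1 a, step p.2 a).
pose mu' (p : Q * option (W k M)) : B :=
  match p.2 with
  | Some u =>
    match excluded_middle_informative (exists n, n < N /\ is_rep L n (val u)) with
    | left H => y (proj1_sig (constructive_indefinite_description _ H))
    | right _ => mu p.1
    end
  | None => mu p.1
  end.
exists (Q * option (W k M))%type, (q0, Some u0), delta', mu'.
have Hfold : forall w q o, foldl delta' (q, o) w = (foldl delta q w, foldl (@step k M) o w).
  by elim=> [|a w IH] q o //=; rewrite -IH.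
move=> n w hr; rewrite Hfold /mu' /=.
have Hval : forall u, foldl (@step k M) (Some u0) w = Some u -> val u = w.
  move=> u h; rewrite (step_val (v := [::]) _ h) //.
  by move=> u1 [<-].
case: (ltnP n N) => nN.
- have [u hu] : exists u, foldl (@step k M) (Some u0) w = Some u.
    by apply: step_some; rewrite /= (HM n w nN hr).
  rewrite hu.
  case: excluded_middle_informative => [H|H]; last first.
    by case: H; exists n; rewrite (Hval _ hu).
  case: constructive_indefinite_description => n' /= [_ h'].
  by rewrite (Hval _ hu) in h'; rewrite (rep_uniq_n h' hr).
- rewrite -HN // (Hmu n w hr).
  case hu: (foldl (@step k M) (Some u0) w) => [u|] //.
  case: excluded_middle_informative => [H|H] //.
  exfalso; case: H => n' [n'N h'].
  rewrite (Hval _ hu) in h'; move: n'N; rewrite (rep_uniq_n h' hr) ltnNge nN //.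
Qed.
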